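(* Let $\boldsymbol J=(J_x)_{x\in\Sigma}$ be weights on $\Sigma=\mathsf V\cup\mathsf E$ (the vertices and nearest-neighbour edges of $\mathbb Z^d$) which are almost surely generic, and let $M$ and $M'$ be ground states for $\boldsymbol J$ in $\mathbb Z^d$. Then (almost surely) $M\,\Delta\,M'$ is a disjoint union of simple infinite and bi-infinite paths.
   Context: A matching of $\mathbb Z^d$ is a set $M\subset\Sigma$ such that every vertex either belongs to $M$ or is an endpoint of exactly one edge of $M$, but not both. For matchings $M,M'$ with $M\Delta M'$ finite, $H(M)-H(M')=\sum_{x\in M\setminus M'}J_x-\sum_{y\in M'\setminus M}J_y$. $M$ is a ground state of $\boldsymbol J$ if there is no matching $M'$ with $M\Delta M'$ finite and $H(M)-H(M')>0$. Weights are generic if for every finite $S\subset\Sigma$ and integers $(k_x)_{x\in S}$ not all zero, $\sum_{x\in S}k_xJ_x\ne0$. A simple infinite path is a sequence $(v_1,(v_1,v_2),(v_2,v_3),\dots)$ with the $v_i$ distinct and $v_i\sim v_{i+1}$; a bi-infinite path is a bi-infinite sequence of edges $(\dots,(v_{-1},v_0),(v_0,v_1),(v_1,v_2),\dots)$ with the $v_i$ distinct. *)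

(* Defs.v *)
From mathcomp Require Import all_boot all_order all_algebra.
From mathcomp Require Import boolp classical_sets cardinality fsbigop reals.
Set Implicit Arguments. Unset Strict Implicit. Unset Printing Implicit Defensive.
Import Order.TTheory GRing.Theory Num.Theory.
Local Open Scope classical_set_scope.
Local Open Scope ring_scope.

Definition vtx (d : nat) := 'rV[int]_d.

Definition unitv (d : nat) (i : 'I_d) : vtx d := delta_mx 0 i.

(* Sigma = V u E.  A nearest-neighbour edge {x, x + e_i} is encoded
   (uniquely) by the pair (x, i). *)
Definition Sigma (d : nat) := (vtx d + (vtx d * 'I_d))%type.

Definition SV d (v : vtx d) : Sigma d := inl v.
Definition SE d (x : vtx d) (i : 'I_d) : Sigma d := inr (x, i).

Definition adj d (v w : vtx d) : Prop :=
  exists i : 'I_d, w = v + unitv i \/ v = w + unitv i.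

Definition edge_between d (v w : vtx d) (s : Sigma d) : Prop :=
  exists i : 'I_d, (s = SE v i /\ w = v + unitv i) \/ (s = SE w i /\ v = w + unitv i).

Definition incident d (v : vtx d) (s : Sigma d) : Prop :=
  match s with
  | inl _ => False
  | inr (x, i) => v = x \/ v = x + unitv i
  end.

Definition matching d (M : set (Sigma d)) : Prop :=
  forall v : vtx d,
    (M (SV v) /\ ~ (exists e, M e /\ incident v e)) \/
    (~ M (SV v) /\ exists e, M e /\ incident v e /\
                     forall e', M e' -> incident v e' -> e' = e).

Definition symdiff T (A B : set T) : set T := (A `\` B) `|` (B `\` A).

(* H(M) - H(M') (meaningful when M Delta M' is finite). *)
Definition Hdiff (R : realType) d (J : Sigma d -> R) (M M' : set (Sigma d)) : R :=
  \sum_(x \in M `\` M') J x - \sum_(y \in M' `\` M) J y.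

Definition ground_state (R : realType) d (J : Sigma d -> R) (M : set (Sigma d)) : Prop :=
  ~ (exists M', matching M' /\ finite_set (symdiff M M') /\ 0 < Hdiff J M M').

Definition generic (R : realType) d (J : Sigma d -> R) : Prop :=
  forall (S : set (Sigma d)) (k : Sigma d -> int),
    finite_set S -> (exists x, S x /\ k x != 0) ->
    \sum_(x \in S) (k x)%:~R * J x != 0.

Definition simple_infinite_path d (P : set (Sigma d)) : Prop :=
  exists v : nat -> vtx d, injective v /\ (forall k, adj (v k) (v k.+1)) /\
    P = [set SV (v 0%N)] `|` [set s | exists k, edge_between (v k) (v k.+1) s].

Definition biinfinite_path d (P : set (Sigma d)) : Prop :=
  exists v : int -> vtx d, injective v /\ (forall k, adj (v k) (v (k + 1))) /\
    P = [set s | exists k, edge_between (v k) (v (k + 1)) s].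

Definition disjoint_union_of_paths d (A : set (Sigma d)) : Prop :=
  exists C : set (set (Sigma d)),
    (forall P, C P -> simple_infinite_path P \/ biinfinite_path P) /\
    (forall P Q, C P -> C Q -> P <> Q -> P `&` Q = set0) /\
    A = \bigcup_(P in C) P.

(* Main.v *)
Require Import Defs.
From mathcomp Require Import all_boot all_order all_algebra.
From mathcomp Require Import boolp classical_sets cardinality fsbigop reals.
Set Implicit Arguments. Unset Strict Implicit. Unset Printing Implicit Defensive.
Import Order.TTheory GRing.Theory Num.Theory.
Local Open Scope classical_set_scope.
Local Open Scope ring_scope.

Section Basics.
Variable d : nat.
Implicit Types (v w : vtx d) (s t : Sigma d).

Lemma unitv_entry (i j : 'I_d) : (unitv i) 0 j = ((i == j)%:R : int).
Proof. by rewrite /unitv mxE eqxx /= eq_sym. Qed.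

Lemma unitv_neq0 (i : 'I_d) : unitv i != 0.
Proof. apply/eqP => /matrixP/(_ 0 i); by rewrite unitv_entry eqxx mxE. Qed.

Lemma unitv_inj (i j : 'I_d) : unitv i = unitv j -> i = j.
Proof. move=> /matrixP/(_ 0 i); rewrite !unitv_entry eqxx.
by case: eqP => // _ /eqP; rewrite oner_eq0. Qed.

Lemma unitv_add_neq0 (i j : 'I_d) : unitv i + unitv j != 0.
Proof. apply/eqP => /matrixP/(_ 0 i); rewrite mxE !unitv_entry eqxx.
by rewrite mxE; case: (j == i). Qed.

Lemma addv_neq v (i : 'I_d) : v + unitv i <> v.
Proof. move=> /eqP; rewrite -subr_eq0 addrC addKr => /eqP h.
by move: (unitv_neq0 i); rewrite h eqxx. Qed.

Definition touches v s : Prop :=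
  match s with inl w => v = w | inr (x, i) => v = x \/ v = x + unitv i end.

Definition is_edge s : bool := if s is inr _ then true else false.

Definition far s v : vtx d :=
  match s with inl _ => v | inr (x, i) => if v == x then x + unitv i else x end.

Lemma far_touch v s : touches v s -> touches (far s v) s.
Proof. case: s => [w|[x i]] /=; first by [].
by case: eqP => _ _; [right|left]. Qed.

Lemma addv_neq' v (i : 'I_d) : v = v + unitv i -> False.
Proof. by move=> /esym/addv_neq. Qed.

Lemma addv_eqb v (i : 'I_d) : (v + unitv i == v) = false.
Proof. by apply/eqP/addv_neq. Qed.
Lemma addv_eqb' v (i : 'I_d) : (v == v + unitv i) = false.
Proof. by apply/eqP/addv_neq'. Qed.

Lemma far_far v s : touches v s -> far s (far s v) = v.
Proof. by case: s => [w|[x i]] //= [->|->]; rewrite ?eqxx ?addv_eqb ?addv_eqb' ?eqxx. Qed.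

Lemma far_cases v w s : touches v s -> touches w s -> w = v \/ w = far s v.
Proof. case: s => [u|[x i]] /=; first by move=> -> ->; left.
by move=> [->|->] [->|->]; rewrite ?eqxx ?addv_eqb ?addv_eqb' ?eqxx; auto. Qed.

Lemma far_neq v s : is_edge s -> touches v s -> far s v <> v.
Proof. case: s => [//|[x i]] _ /= [->|->]; rewrite ?eqxx ?addv_eqb ?addv_eqb'.
  exact: addv_neq. exact: addv_neq'. Qed.

Lemma far_eb v s : is_edge s -> touches v s -> edge_between v (far s v) s.
Proof. case: s => [//|[x i]] _ /= [->|->]; rewrite ?eqxx ?addv_eqb ?addv_eqb'; exists i.
 by left. by right. Qed.

Lemma sum_unit_contra v (i j : 'I_d) : v = v + unitv i + unitv j -> False.
Proof. move=> h. have h' : v + 0 = v + (unitv i + unitv j) by rewrite addr0 addrA -h.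
by move/addrI: h' => /esym/eqP; rewrite (negbTE (unitv_add_neq0 i j)). Qed.

Lemma eb_uniq v w s t : edge_between v w s -> edge_between v w t -> s = t.
Proof.
move=> [i [[-> ->]|[-> ->]]] [j [[-> h]|[-> h]]].
- by move/addrI: h => /unitv_inj ->.
- by case: (sum_unit_contra h).
- by case: (sum_unit_contra h).
- by move/addrI: h => /unitv_inj ->.
Qed.

Lemma eb_adj v w s : edge_between v w s -> adj v w.
Proof. by move=> [i [[_ ->]|[_ ->]]]; exists i; [left|right]. Qed.

End Basics.


Lemma em (P : Prop) : P \/ ~ P.
Proof. by case: (pselect P); [left|right]. Qed.

Section Match.
Variable d : nat.
Implicit Types (v w : vtx d) (s t : Sigma d) (N : set (Sigma d)).

Definition uniqat N v := exists a, N a /\ touches v a /\ forall b, N b -> touches v b -> b = a.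

Lemma match_uniq N : matching N -> forall v, uniqat N v.
Proof.
move=> hN v; case: (hN v) => [[Nv nE]|[nNv [e [Ne [ie ue]]]]].
  exists (SV v); split=> //; split=> // -[w|[x i]] Nb /= tb; first by rewrite tb.
  by case: nE; exists (inr (x, i)).
exists e; split=> //; split; first by case: e Ne ie {ue}.
move=> [w|[x i]] Nb /= tb; first by case: nNv; rewrite tb.
exact: ue.
Qed.

Lemma uniq_match N : (forall v, uniqat N v) -> matching N.
Proof.
move=> hN v; case: (hN v) => [[w|[x i]] [Na [ta ua]]].
  rewrite /= in ta; subst w; left; split => // -[e [Ne ie]].
  by move: (ua e Ne); case: e ie {Ne} => // -[x i] ie /(_ ie).
right; split.
  by move=> /ua /(_ erefl).
exists (inr (x, i)); split=> //; split=> // e' Ne' ie'; apply: ua => //.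
by case: e' ie' {Ne'}.
Qed.

Lemma uniqat_ext N N2 v : (forall t, touches v t -> (N2 t <-> N t)) -> uniqat N v -> uniqat N2 v.
Proof.
move=> h [a [Na [ta ua]]]; exists a; split; first by apply/h.
by split=> // b /h Nb tb; apply: ua => //; apply: Nb.
Qed.

Variables M M' : set (Sigma d).
Hypotheses (hM : matching M) (hM' : matching M').
Let D := symdiff M M'.

Lemma other_ex v s : D s -> touches v s -> exists t, D t /\ touches v t /\ t <> s /\
   forall u, D u -> touches v u -> u = s \/ u = t.
Proof.
move=> Ds ts.
have [a [Ma [ta ua]]] := match_uniq hM v.
have [b [Mb [tb ub]]] := match_uniq hM' v.
case: Ds => [[Ms nMs]|[Ms nMs]].
- have sa := ua _ Ms ts; subst a.
  have bs : b <> s by move=> bs; subst b.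
  exists b; split; first by right; split=> // /ua /(_ tb).
  split=> //; split=> // u [[Mu _]|[Mu _]]  tu; first by left; apply: ua.
  by right; apply: ub.
- have sb := ub _ Ms ts; subst b.
  have bs : a <> s by move=> bs; subst a.
  exists a; split; first by left; split=> // /ub /(_ ta).
  split=> //; split=> // u [[Mu _]|[Mu _]]  tu; first by right; apply: ua.
  by left; apply: ub.
Qed.

Definition other v s := xget s [set t | D t /\ touches v t /\ t <> s].

Lemma other_spec v s : D s -> touches v s ->
  D (other v s) /\ touches v (other v s) /\ other v s <> s /\
  forall u, D u -> touches v u -> u = s \/ u = other v s.
Proof.
move=> Ds ts; have [t [Dt [tt [ts' ut]]]] := other_ex Ds ts.
have : [set t | D t /\ touches v t /\ t <> s] (other v s).
  by apply: xgetPex; exists t.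
move=> [Do [to os]]; have ot : other v s = t.
  by case: (ut _ Do to).
by rewrite ot.
Qed.

Lemma other_eq v s t : D s -> touches v s -> D t -> touches v t -> t <> s -> other v s = t.
Proof.
move=> Ds ts Dt tt ns; have [_ [_ [_ h]]] := other_spec Ds ts.
by case: (h _ Dt tt).
Qed.

Lemma other_inv v s : D s -> touches v s -> other v (other v s) = s.
Proof.
move=> Ds ts; have [Do [to [os _]]] := other_spec Ds ts.
by apply: other_eq => // /esym.
Qed.

Variables (R : realType) (J : Sigma d -> R).
Hypotheses (hJ : generic J) (gM : ground_state J M) (gM' : ground_state J M').

Lemma flip_match N N' C : matching N -> matching N' -> C `<=` symdiff N N' ->
  (forall v s, C s -> touches v s -> forall t, touches v t -> symdiff N N' t -> C t) ->
  matching (symdiff N C).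
Proof.
move=> hN hN' CD hC; apply: uniq_match => v.
case: (pselect (exists s, C s /\ touches v s)) => [[s [Cs ts]]|nC].
- apply: (uniqat_ext _ (match_uniq hN' v)) => t tt.
  have h1 := hC _ _ Cs ts _ tt; have h2 := CD t.
  rewrite /symdiff /setD /setU /= in h1 h2 *.
  have := em (N t); have := em (N' t); have := em (C t); tauto.
- apply: (uniqat_ext _ (match_uniq hN v)) => t tt.
  have h1 : ~ C t by move=> Ct; apply: nC; exists t.
  rewrite /symdiff /setD /setU /=; tauto.
Qed.

Lemma symdiff_flip N C : symdiff N (symdiff N C) = C.
Proof.
apply: funext => x; apply: propext; rewrite /symdiff /setD /setU /=.
have := em (N x); have := em (C x); tauto.
Qed.

Lemma key (C : set (Sigma d)) : C `<=` D -> finite_set C -> (exists s, C s) ->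
  (forall v s, C s -> touches v s -> C (other v s)) -> False.
Proof.
move=> CD fC [s0 Cs0] hC.
have hC' : forall v s, C s -> touches v s -> forall t, touches v t -> D t -> C t.
  move=> v s Cs ts t tt Dt; have [_ [_ [_ h]]] := other_spec (CD _ Cs) ts.
  by case: (h _ Dt tt) => ->; [|apply: hC].
have m1 := flip_match hM hM' CD hC'.
have CD' : C `<=` symdiff M' M.
  by move=> x /CD; rewrite /D /symdiff /setU /setD /=; tauto.
have hC'' : forall v s, C s -> touches v s -> forall t, touches v t -> symdiff M' M t -> C t.
  move=> v s Cs ts t tt Dt; apply: (hC' v s) => //.
  by move: Dt; rewrite /D /symdiff /setU /setD /=; tauto.
have m2 := flip_match hM' hM CD' hC''.
pose S1 := \sum_(x \in C `&` M) J x.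
pose S2 := \sum_(x \in C `&` ~` M) J x.
have e1 : Hdiff J M (symdiff M C) = S1 - S2.
  rewrite /Hdiff /S1 /S2; congr (_ - _); apply: eq_fsbigl; apply: funext => x;
  apply: propext; rewrite /symdiff /setD /setU /setI /setC /=;
  have := em (M x); have := em (C x); tauto.
have e2 : Hdiff J M' (symdiff M' C) = S2 - S1.
  rewrite /Hdiff /S1 /S2; congr (_ - _); apply: eq_fsbigl; apply: funext => x;
  apply: propext; move: (CD x); rewrite /D /symdiff /setD /setU /setI /setC /=;
  have := em (M x); have := em (M' x); have := em (C x); tauto.
pose k x : int := if `[< M x >] then 1 else -1.
have k0 x : k x != 0 by rewrite /k; case: ifP.
have := hJ fC (ex_intro _ s0 (conj Cs0 (k0 s0))).
rewrite (fsbigID M) //.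
have fCM : finite_set (C `&` M) by apply: finite_setIl.
have fCN : finite_set (C `&` ~` M) by apply: finite_setIl.
have E1 : \sum_(x \in C `&` M) (k x)%:~R * J x = S1.
  apply: eq_fsbigr => x; rewrite in_setE => -[_ Mx]; rewrite /k.
  by rewrite asboolT // mul1r.
have E2 : \sum_(x \in C `&` ~` M) (k x)%:~R * J x = - S2.
  rewrite (eq_fsbigr (fun x => - J x)); last first.
    move=> x; rewrite in_setE => -[_ Mx]; rewrite /k.
    by rewrite asboolF // mulN1r.
  by rewrite /S2 !fsbig_finite // sumrN.
rewrite E1 E2 => hne.
case: (ltgtP (S1 - S2) 0) => h.
- apply: gM'; exists (symdiff M' C); split=> //; split.
    by rewrite symdiff_flip.
  by rewrite e2 -opprB oppr_gt0.
- apply: gM; exists (symdiff M C); split=> //; split.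
    by rewrite symdiff_flip.
  by rewrite e1.
- by move/eqP: hne; apply; exact: h.
Qed.

End Match.


Section Walk.
Variable d : nat.
Variables M M' : set (Sigma d).
Hypotheses (hM : matching M) (hM' : matching M').
Let D := symdiff M M'.
Let oth := other M M'.
Hypothesis Hkey : forall C : set (Sigma d), C `<=` D -> finite_set C -> (exists s, C s) ->
  (forall v s, C s -> touches v s -> C (oth v s)) -> False.

Definition state := (vtx d * Sigma d)%type.
Definition valid (x : state) := D x.2 /\ touches x.1 x.2.
Definition step (x : state) : state := let t := oth x.1 x.2 in (far t x.1, t).
Definition rstep (x : state) : state := let u := far x.2 x.1 in (u, oth u x.2).
Definition rev (x : state) : state := (far x.2 x.1, x.2).

Lemma valid_step x : valid x -> valid (step x).
Proof.
case: x => v s [Ds ts]; have [Do [to _]] := other_spec hM hM' Ds ts.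
by split=> //=; apply: far_touch.
Qed.

Lemma valid_rstep x : valid x -> valid (rstep x).
Proof.
case: x => v s [Ds ts]; have tu := far_touch ts.
by have [Do [to _]] := other_spec hM hM' Ds tu.
Qed.

Lemma valid_rev x : valid x -> valid (rev x).
Proof. by case: x => v s [Ds ts]; split=> //=; apply: far_touch. Qed.

Lemma rstep_step x : valid x -> rstep (step x) = x.
Proof.
case: x => v s [Ds ts]; have [Do [to _]] := other_spec hM hM' Ds ts.
rewrite /rstep /step /= far_far //.
by rewrite /oth other_inv.
Qed.

Lemma step_rstep x : valid x -> step (rstep x) = x.
Proof.
case: x => v s [Ds ts]; have tu := far_touch ts.
rewrite /rstep /step /= /oth other_inv // far_far //.
Qed.

Lemma step_rev x : step (rev x) = rev (rstep x).
Proof. by []. Qed.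

Lemma rstep_rev x : valid x -> rstep (rev x) = rev (step x).
Proof.
case: x => v s [Ds ts]; have [Do [to _]] := other_spec hM hM' Ds ts.
by rewrite /rstep /rev /step /= !far_far.
Qed.

Lemma rev_rev x : valid x -> rev (rev x) = x.
Proof. by case: x => v s [Ds ts]; rewrite /rev /= far_far. Qed.

Section Seq.
Variable X : nat -> state.
Hypotheses (hX : forall m, X m.+1 = step (X m)) (hv : valid (X 0)).

Lemma validX m : valid (X m).
Proof. by elim: m => // m IH; rewrite hX; apply: valid_step. Qed.

Local Notation vv m := (X m).1.
Local Notation ss m := (X m).2.

Lemma W1 m : ss m.+1 = oth (vv m) (ss m). Proof. by rewrite hX. Qed.
Lemma W1' m : vv m.+1 = far (ss m.+1) (vv m). Proof. by rewrite hX. Qed.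

Lemma W2 m : touches (vv m) (ss m.+1).
Proof. have [Ds ts] := validX m; rewrite W1; by have [_ [? _]] := other_spec hM hM' Ds ts. Qed.

Lemma W3 m : oth (vv m) (ss m.+1) = ss m.
Proof. have [Ds ts] := validX m; by rewrite W1 /oth other_inv. Qed.

Lemma W4 w m : touches w (ss m.+1) -> w = vv m \/ w = vv m.+1.
Proof. by move=> tw; rewrite W1'; apply: far_cases => //; apply: W2. Qed.

Lemma W6 m : ss m.+1 <> ss m.
Proof. have [Ds ts] := validX m; rewrite W1; by have [_ [_ [? _]]] := other_spec hM hM' Ds ts. Qed.

Lemma walk_closed lo hi : (lo <= hi)%N ->
  let S := [set t | exists2 m, (lo <= m <= hi)%N & t = ss m] in
  S (oth (vv hi) (ss hi)) ->
  (forall w, touches w (ss lo) -> w <> vv lo -> S (oth w (ss lo))) -> False.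
Proof.
move=> lohi S Hhi Hlo; apply: (Hkey (C := S)).
- by move=> t [m _ ->]; case: (validX m).
- apply: (@sub_finite_set _ _ ((fun m => ss m) @` `I_(hi.+1))).
    by move=> t [m /andP [_ mh] ->]; exists m => //=.
  by apply: finite_image; apply: finite_II.
- by exists (ss lo); exists lo => //; rewrite leqnn.
- move=> w t [m /andP [lm mh] ->] tw.
  case: (eqVneq w (vv m)) => [->|nw].
    case: (ltngtP m hi) => [mlt|//|->]; last by [].
      by exists m.+1; [rewrite mlt (leq_trans lm) | rewrite W1].
    by move: mh; rewrite leqNgt => /negP.
  case: (ltngtP lo m) => [lt|//|eq]; last by subst; apply: Hlo => //; apply/eqP.
  + case: m lt lm mh tw nw => // m lt lm mh tw nw.
    case: (W4 tw) => [->|/eqP]; last by rewrite (negbTE nw).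
    by rewrite W3; exists m => //; rewrite -ltnS lt (leq_trans _ mh).
  + by move: lm; rewrite leqNgt => /negP.
Qed.

Lemma no_end : ~~ is_edge (ss 0) -> forall n, is_edge (ss n.+1).
Proof.
move=> h0 n; apply/negPn/negP => hn.
have [u hu] : exists u, ss n.+1 = inl u by case: (ss n.+1) hn => // u; exists u.
have e1 : vv n.+1 = vv n by rewrite W1' hu.
apply: (@walk_closed 0 n.+1) => //.
- by rewrite e1 W3; exists n => //; rewrite leqnSn.
- move=> w tw nw; apply: False_ind; apply: nw.
  have [_ t0] := hv; move: tw t0 h0; case: (X 0) => v0 [u' /= -> -> //|[x i] _ _ //].
Qed.

Hypothesis he : forall m, is_edge (ss m.+1).

Lemma no_repeat n j : vv j <> vv (j + n.+1).
Proof.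
elim/ltn_ind: n j => n IH j E.
case: n IH E => [|n] IH E.
  move: E; rewrite addn1 W1' => /esym; apply: far_neq => //; apply: W2.
have [eq|neq] := pselect (ss j.+1 = ss (j + n.+2)).
  case: n IH E eq => [|n] IH E eq.
    by have := @W6 j.+1; rewrite -addn2 -eq => /(_ erefl).
  apply: (IH n _ j.+1); first by rewrite ltnS ltnW.
  have k1 : (j.+1 + n.+1 = j + n.+2)%N by rewrite addSnnS.
  rewrite k1.
  have := W1' (j + n.+2); rewrite -addnS => hk.
  have := W2 (j + n.+2); rewrite -addnS => tk.
  have -> : vv (j + n.+2) = far (ss (j + n.+3)) (vv (j + n.+3)).
    by rewrite hk far_far.
  by rewrite -E -eq W1'.
have lohi : (j.+1 <= j + n.+2)%N by rewrite -addn1 leq_add2l.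
apply: (@walk_closed j.+1 (j + n.+2) lohi).
- have [Dk tk] := validX (j + n.+2).
  have [D1 _] := validX j.+1.
  rewrite /oth (other_eq hM hM' Dk tk D1) //; first by exists j.+1 => //; rewrite leqnn.
  by rewrite -E; apply: W2.
- move=> w tw nw; case: (W4 tw) => // ->.
  have [Dk tk] := validX (j + n.+2).
  have [D1 t1] := validX j.+1.
  rewrite /oth (other_eq hM hM' D1 (W2 j) Dk) //; first by exists (j + n.+2) => //; rewrite lohi leqnn.
  - by rewrite E.
  - by move=> /esym.
Qed.

Lemma walk_inj : injective (fun m => vv m).
Proof.
move=> a b /= E; case: (ltngtP a b) => // h.
- by move: E; rewrite -(subnKC h) addSnnS; move=> /no_repeat.
- by move: E => /esym; rewrite -(subnKC h) addSnnS; move=> /no_repeat.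
Qed.

Lemma walk_eb m : edge_between (vv m) (vv m.+1) (ss m.+1).
Proof. by rewrite W1'; apply: far_eb => //; apply: W2. Qed.

End Seq.

Lemma negz0_add1 : Negz 0 + 1 = 0 :> int. Proof. by []. Qed.
Lemma negzS_add1 n : Negz n.+1 + 1 = Negz n.
Proof. by rewrite !NegzE -[(n.+2)%N]addn1 PoszD opprD addrNK. Qed.
Lemma posz_add1 (n : nat) : Posz n + 1 = Posz n.+1.
Proof. by rewrite -PoszD addn1. Qed.

Definition iterZ (x : state) (k : int) : state :=
  match k with Posz n => iter n step x | Negz n => iter n.+1 rstep x end.

Lemma iter_step_valid n x : valid x -> valid (iter n step x).
Proof. by move=> vx; elim: n => //= n IH; apply: valid_step. Qed.
Lemma iter_rstep_valid n x : valid x -> valid (iter n rstep x).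
Proof. by move=> vx; elim: n => //= n IH; apply: valid_rstep. Qed.

Lemma iterZ_valid x k : valid x -> valid (iterZ x k).
Proof. by case: k => n vx; [exact: iter_step_valid | exact: (iter_rstep_valid n.+1 vx)]. Qed.

Lemma iterZS x k : valid x -> iterZ x (k + 1) = step (iterZ x k).
Proof.
move=> vx; case: k => [n|[|n]].
- by rewrite posz_add1.
- by rewrite negz0_add1 /= step_rstep.
- rewrite negzS_add1 /= step_rstep //.
  first [exact: (iter_rstep_valid n.+1 vx) | exact: (iter_rstep_valid n.+2 vx) | exact: (iter_rstep_valid n vx)].
Qed.

Lemma int_rec_uniq (f g : int -> state) : (forall k, valid (f k)) -> (forall k, valid (g k)) ->
  (forall k, f (k + 1) = step (f k)) -> (forall k, g (k + 1) = step (g k)) ->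
  f 0 = g 0 -> forall k, f k = g k.
Proof.
move=> vf vg rf rg e0.
have back : forall h : int -> state, (forall k, valid (h k)) ->
    (forall k, h (k + 1) = step (h k)) -> forall k, h k = rstep (h (k + 1)).
  by move=> h vh rh k; rewrite rh rstep_step.
case=> n.
- elim: n => // n IH; by rewrite -posz_add1 rf rg IH.
- elim: n => [|n IH].
    by rewrite (back f) // (back g) // negz0_add1 e0.
  by rewrite (back f) // (back g) // negzS_add1 IH.
Qed.

Definition Orb (x : state) := [set t | exists k, t = (iterZ x k).2].

Lemma iterZ_shift x k l : valid x -> iterZ (iterZ x k) l = iterZ x (k + l).
Proof.
move=> vx; apply: (int_rec_uniq (f := fun l => iterZ (iterZ x k) l) (g := fun l => iterZ x (k + l))).
- by move=> l'; do 2 apply: iterZ_valid.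
- by move=> l'; apply: iterZ_valid.
- by move=> l'; apply: iterZS; apply: iterZ_valid.
- by move=> l' /=; rewrite addrA iterZS.
- by rewrite addr0.
Qed.

Lemma Orb_shift x k : valid x -> Orb (iterZ x k) = Orb x.
Proof.
move=> vx; apply: funext => t; apply: propext; split=> -[l ->].
  by rewrite iterZ_shift //; exists (k + l).
by exists (l - k); rewrite iterZ_shift // addrC subrK.
Qed.

Lemma iterZ_rev x l : valid x -> iterZ (rev x) l = rev (iterZ x (- l)).
Proof.
move=> vx; apply: (int_rec_uniq (f := fun l => iterZ (rev x) l) (g := fun l => rev (iterZ x (- l)))).
- by move=> l'; apply: iterZ_valid; apply: valid_rev.
- by move=> l'; apply: valid_rev; apply: iterZ_valid.
- by move=> l'; apply: iterZS; apply: valid_rev.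
- move=> l' /=; rewrite step_rev.
  have -> : iterZ x (- l') = step (iterZ x (- (l' + 1))).
    by rewrite -iterZS // opprD addrNK.
  by rewrite rstep_step //; apply: iterZ_valid.
- by rewrite oppr0.
Qed.

Lemma Orb_rev x : valid x -> Orb (rev x) = Orb x.
Proof.
move=> vx; apply: funext => t; apply: propext; split=> -[l ->].
  by rewrite iterZ_rev //; exists (- l).
by exists (- l); rewrite iterZ_rev // opprK.
Qed.

Lemma Orb_same x y : valid x -> valid y -> x.2 = y.2 -> Orb x = Orb y.
Proof.
case: x => v s; case: y => w t [Ds ts] [Dt tt] est; simpl in *; subst t.
case: (far_cases ts tt) => ->; first by [].
by rewrite -(Orb_rev (x := (v, s))).
Qed.

Lemma Orb_inter x y t : valid x -> valid y -> Orb x t -> Orb y t -> Orb x = Orb y.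
Proof.
move=> vx vy [k ->] [l el].
rewrite -(Orb_shift k vx) -(Orb_shift l vy); apply: Orb_same => //; apply: iterZ_valid => //.
Qed.

Lemma Orb_D x : valid x -> Orb x `<=` D.
Proof. by move=> vx t [k ->]; case: (iterZ_valid k vx). Qed.

Lemma step_eb y : valid y -> is_edge (step y).2 -> edge_between y.1 (step y).1 (step y).2.
Proof.
case: y => v s [Ds ts] /= he; have [_ [to _]] := other_spec hM hM' Ds ts.
exact: far_eb.
Qed.

Lemma iter_rstep_rev n y : valid y -> iter n rstep (rev y) = rev (iter n step y).
Proof.
move=> vy; elim: n => //= n ->; rewrite rstep_rev //; exact: iter_step_valid.
Qed.

Lemma orb_path x : valid x -> simple_infinite_path (Orb x) \/ biinfinite_path (Orb x).
Proof.
move=> vx.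
case: (pselect (exists k, ~~ is_edge (iterZ x k).2)) => [[k hk]|nk].
- left; have vz := iterZ_valid k vx; rewrite -(Orb_shift k vx).
  move: vz hk; case: (iterZ x k) => z1 [w|//] vz _.
  have ez : z1 = w by case: vz.
  subst z1; set z := (w, inl w) : state.
  pose X m := iter m step z.
  have hX : forall m, X m.+1 = step (X m) by [].
  have he := @no_end X hX vz erefl.
  exists (fun m => (X m).1); split; first exact: walk_inj.
  split; first by move=> m; apply: eb_adj; apply: walk_eb.
  apply: funext => t; apply: propext; split.
  + move=> [[n|n] ->].
      case: n => [|n]; first by left.
      by right; exists n; apply: walk_eb.
    have E : iterZ z (Negz n) = rev (X n.+1) := iter_rstep_rev n.+1 vz.
    have E2 : (iterZ z (Negz n)).2 = (X n.+1).2 by rewrite E.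
    rewrite E2; right; exists n; exact: walk_eb.
  + move=> [->|[n hn]]; first by exists 0.
    by exists (Posz n.+1); apply: (eb_uniq hn); apply: walk_eb.
- right.
  have he : forall k, is_edge (iterZ x k).2.
    by move=> k; apply/negPn/negP => h; apply: nk; exists k.
  exists (fun k => (iterZ x k).1); split.
    have key0 : forall a (n : nat), (iterZ x a).1 = (iterZ x (a + n%:Z)).1 -> n = 0%N.
      move=> a n E.
      pose X m := iterZ x (a + m%:Z).
      have hX : forall m, X m.+1 = step (X m).
        by move=> m; rewrite /X -posz_add1 addrA iterZS.
      have hv : valid (X 0) by apply: iterZ_valid.
      have he' : forall m, is_edge (X m.+1).2 by move=> m; apply: he.
      apply: (@walk_inj X hX hv he' n 0) => /=.
      by rewrite /X addr0 E.
    move=> a b /= E; case: (lerP a b) => h.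
      have : b = a + (`|b - a|%N)%:Z by rewrite gez0_abs ?subr_ge0 // (addrC a) subrK.
      move=> eb; move: E; rewrite eb => /key0 ->; by rewrite addr0.
    have : a = b + (`|a - b|%N)%:Z by rewrite gez0_abs ?subr_ge0 ?ltW // (addrC b) subrK.
    move=> ea; move: E; rewrite ea => /esym /key0 ->; by rewrite addr0.
  split.
    by move=> k; apply: eb_adj; rewrite iterZS //; apply: step_eb; [apply: iterZ_valid | rewrite -iterZS].
  apply: funext => t; apply: propext; split.
  + move=> [k ->]; exists (k - 1); rewrite subrK.
    have Ek : iterZ x k = step (iterZ x (k - 1)) by rewrite -iterZS // subrK.
    rewrite Ek.
    apply: step_eb; first by apply: iterZ_valid.
    by rewrite -iterZS.
  + move=> [k hk]; exists (k + 1); apply: (eb_uniq hk).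
    rewrite iterZS //; apply: step_eb; first by apply: iterZ_valid.
    by rewrite -iterZS.
Qed.

Lemma paths_decomp : disjoint_union_of_paths D.
Proof.
exists [set P | exists x, valid x /\ P = Orb x]; split.
  by move=> P [x [vx ->]]; apply: orb_path.
split.
  move=> P Q [x [vx ->]] [y [vy ->]] PQ; apply: funext => t; apply: propext; split=> //.
  by move=> [Pt Qt]; apply: PQ; apply: (Orb_inter vx vy Pt Qt).
apply: funext => t; apply: propext; split.
  move=> Dt.
  have [v tv] : exists v, touches v t.
    by case: t Dt => [w|[x i]] _; [exists w | exists x; left].
  exists (Orb (v, t)); first by exists (v, t).
  by exists 0.
by move=> [P [x [vx ->]] Pt]; apply: (Orb_D vx).
Qed.

End Walk.


Unset Implicit Arguments.
Set Strict Implicit.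

Theorem lemma4p1 (R : realType) (d : nat) (J : Sigma d -> R)
    (M M' : set (Sigma d)) :
  generic J -> matching M -> matching M' ->
  ground_state J M -> ground_state J M' ->
  disjoint_union_of_paths (symdiff M M').
Proof.
move=> hJ hM hM' gM gM'.
apply: (paths_decomp hM hM').
exact: (key hM hM' hJ gM gM').
Qed.
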